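(* Let $G=(V,E)$ be a (directed) graph with positive edge weights $w$ and source $s$ from which every vertex is reachable, with no two vertices equidistant from $s$. Run Dijkstra's algorithm on $(G,s,w)$ and, for each $x_i\in V\setminus\{s\}$, let $[a_i,b_i]$ be its timestamp interval. For each $x_i\in V\setminus\{s\}$ choose a real value $r_i\in[a_i,b_i]$. If all $r_i$ are distinct, then the sequence $L$ ordering all $x_i$ by $r_i$ is a linearization of $(G,s)$.
   Context: Dijkstra's algorithm with a min-heap $H$: set distance$[v]=\infty$ for all $v$, distance$[s]=0$, push $s$ with key $0$. While $H$ is nonempty: pop the minimum $u$, append it to the output, and for each edge $(u,v)$: if distance$[v]=\infty$, set distance$[v]=$distance$[u]+w(u,v)$ and push $v$ with that key; else if $v\in H$ and distance$[v]>$distance$[u]+w(u,v)$, update distance$[v]$ and decrease its key. Time is a counter, initially $0$, incremented after every \textsc{Push}; $a_i$ and $b_i$ are the times $x_i$ is pushed and popped. A linearization of $(G,s)$ is a permutation $L$ of $V\setminus\{s\}$ such that for some edge weighting $w'$ of $G$, $L$ is the order of the vertices of $V\setminus\{s\}$ by their shortest-path distance from $s$ under $w'$. *)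

(* Defs.v *)
From HB Require Import structures.
From mathcomp Require Import all_boot all_order all_algebra.
Set Implicit Arguments. Unset Strict Implicit. Unset Printing Implicit Defensive.
Import Order.TTheory GRing.Theory Num.Theory.
Local Open Scope ring_scope.

Section Dijkstra.
Variables (R : realFieldType) (V : finType).
(* Directed graph given by ordered adjacency lists: the edges are (u,v) with
   v \in adj u; adj u also fixes the order in which Dijkstra scans the edges
   out of u. *)
Variables (adj : V -> seq V) (w : V -> V -> R) (s : V).

Fixpoint pweight (wt : V -> V -> R) (x : V) (p : seq V) : R :=
  match p with
  | [::] => 0
  | y :: p' => wt x y + pweight wt y p'
  end.

Definition is_sp_dist (wt : V -> V -> R) (v : V) (d : R) : Prop :=
  (exists p, path (grel adj) s p /\ last s p = v /\ pweight wt s p = d) /\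
  (forall p, path (grel adj) s p -> last s p = v -> d <= pweight wt s p).

Definition linearization (L : seq V) : Prop :=
  perm_eq L (enum [pred x | x != s]) /\
  exists w' : V -> V -> R,
    (forall u v, v \in adj u -> 0 < w' u v) /\
    exists d : V -> R, (forall v, is_sp_dist w' v (d v)) /\
      sorted (fun x y => d x < d y) L.

(* State of Dijkstra's algorithm. dst v = None means distance infinity. *)
Record state := St {
  dst : V -> option R;
  heap : {set V};
  out : seq V;
  time : nat;
  pusht : V -> nat;    (* a: time at which a vertex was pushed *)
  popt : V -> nat      (* b: time at which a vertex was popped *)
}.

Definition upd {T : Type} (f : V -> T) (x : V) (y : T) : V -> T :=
  fun z => if z == x then y else f z.

Definition relax (u : V) (du : R) (st : state) (v : V) : state :=
  match dst st v with
  | None =>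
      St (upd (dst st) v (Some (du + w u v))) (v |: heap st) (out st)
         (time st).+1 (upd (pusht st) v (time st)) (popt st)
  | Some dv =>
      if (v \in heap st) && (du + w u v < dv) then
        St (upd (dst st) v (Some (du + w u v))) (heap st) (out st)
           (time st) (pusht st) (popt st)
      else st
  end.

(* one iteration of the while loop: pop a minimum u (any minimum, ties are
   broken arbitrarily), append it to the output, scan its out-edges in order *)
Inductive step : state -> state -> Prop :=
| StepPop st u du :
    u \in heap st -> dst st u = Some du ->
    (forall v, v \in heap st -> exists dv, dst st v = Some dv /\ du <= dv) ->
    step st (foldl (relax u du)
               (St (dst st) (heap st :\ u) (rcons (out st) u) (time st)
                   (pusht st) (upd (popt st) u (time st)))
               (adj u)).

Definition init_state : state :=
  St (fun v => if v == s then Some 0 else None) [set s] [::] 1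
     (fun _ => 0%N) (fun _ => 0%N).

Inductive dijkstra_run : state -> Prop :=
| RunInit : dijkstra_run init_state
| RunStep st st' : dijkstra_run st -> step st st' -> dijkstra_run st'.

End Dijkstra.

(* Main.v *)
Require Import Defs.
From HB Require Import structures.
From mathcomp Require Import all_boot all_order all_algebra.
From mathcomp Require Import lra.
Set Implicit Arguments. Unset Strict Implicit. Unset Printing Implicit Defensive.
Import Order.TTheory GRing.Theory Num.Theory.
Local Open Scope ring_scope.

Section Pf.
Variables (R : realFieldType) (V : finType) (adj : V -> seq V) (w : V -> V -> R) (s : V).

Notation disc st x := (isSome (@dst R V st x)).

Definition Ext (P : pred V) (st0 st : state R V) : Prop :=
 [/\ forall x, disc st0 x -> [/\ disc st x, pusht st x = pusht st0 x & (x \in heap st) = (x \in heap st0)],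
     popt st = popt st0, (time st0 <= time st)%N,
     forall x, disc st x -> ~~ disc st0 x -> [/\ P x, x \in heap st & (time st0 <= pusht st x)%N]
   & forall x, x \in heap st -> (x \in heap st0) || disc st x].

Lemma Ext_refl P st : Ext P st st.
Proof. split=> //; by move=> x ->. Qed.

Lemma Ext_trans P a b c : Ext P a b -> Ext P b c -> Ext P a c.
Proof.
case=> a1 a2 a3 a4 a5 [b1 b2 b3 b4 b5]; split.
- move=> x /a1 [h1 h2 h3]; have [k1 k2 k3] := b1 x h1.
  by split => //; rewrite ?k2 ?k3.
- by rewrite b2.
- exact: leq_trans a3 b3.
- move=> x hc ha; case hb: (disc b x).
  + have [p1 p2 p3] := a4 x hb ha; have [k1 k2 k3] := b1 x hb.
    by split => //; rewrite ?k2 ?k3.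
  + have [p1 p2 p3] := b4 x hc (negbT hb).
    by split => //; apply: leq_trans a3 p3.
- move=> x /b5 /orP [/a5 /orP [->//|h]|->]; last by rewrite orbT.
  by have [-> _ _] := b1 x h; rewrite orbT.
Qed.

Lemma Ext_relax (P : pred V) u du st v : P v -> Ext P st (relax w u du st v).
Proof.
move=> Pv; rewrite /relax; case E: (dst st v) => [dv|].
- case: ifP => _; last exact: Ext_refl.
  split => //=.
  + move=> x hx; split => //; rewrite /upd; by case: eqP.
  + move=> x; rewrite /upd; case: eqP => [->|]; by [rewrite E | move=> _ ->].
  + by move=> x ->.
- split => //=.
  + move=> x hx; have xv : x != v by apply/eqP => exv; rewrite exv E in hx.
    by rewrite /upd (negbTE xv) in_setU1 (negbTE xv).
  + move=> x; rewrite /upd; case: eqP => [-> _ _|_ ->//].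
    by rewrite setU11.
  + move=> x; rewrite in_setU1 => /orP [/eqP ->|->]; last by [].
    by rewrite /upd eqxx orbT.
Qed.

Lemma Ext_fold (P : pred V) u du l st : all P l -> Ext P st (foldl (relax w u du) st l).
Proof.
elim: l st => [|v l IH] st /=; first by move=> _; exact: Ext_refl.
case/andP => Pv Pl; apply: Ext_trans (Ext_relax u du st Pv) (IH _ Pl).
Qed.

Lemma fold_disc u du l st x : x \in l -> disc (foldl (relax w u du) st l) x.
Proof.
elim: l st => [|v l IH] st //=; rewrite in_cons => /orP [/eqP ->|/IH //].
have [h _ _ _ _] := Ext_fold u du (relax w u du st v) (all_predT l).
suff H : isSome (dst (relax w u du st v) v) by case: (h v H).
rewrite /relax; case E: (dst st v) => [dv|]; last by rewrite /= /upd eqxx.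
case: ifP => _; by rewrite /= ?/upd ?eqxx ?E.
Qed.


Definition Inv (st : state R V) : Prop :=
  [/\ disc st s,
      forall x, x \in heap st -> disc st x,
      forall x, disc st x -> x \notin heap st -> forall y, y \in adj x -> disc st y,
      forall v, v != s -> disc st v -> (1 <= pusht st v)%N /\
        exists u, [/\ v \in adj u, u != v, disc st u, u \notin heap st &
                      (popt st u <= pusht st v)%N]
    & (1 <= time st)%N].

Lemma Inv_init : Inv (init_state R s).
Proof.
split => //=.
- by rewrite eqxx.
- by move=> x; rewrite in_set1 => /eqP ->; rewrite eqxx.
- by move=> x; case: eqP => [->|]; rewrite ?in_set1 ?eqxx.
- by move=> v /negbTE ->.
Qed.

Lemma Inv_step st st' : Inv st -> step adj w st st' -> Inv st'.
Proof.
move=> inv hs; case: hs inv => {st st'} st u du uh Eu _ [I1 I2 I3 I4 I5].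
set st1 := St _ _ _ _ _ _.
have hall : all (mem (adj u)) (adj u) by apply/allP.
have [e1 e2 e3 e4 e5] := Ext_fold u du st1 hall.
set st' := foldl _ _ _.
have ud : disc st u by rewrite Eu.
split.
- by have [] := e1 s I1.
- move=> x /e5 /orP [|//]; rewrite /= in_setD1 => /andP [_ /I2 h].
  by have [] := e1 x h.
- move=> x hx hnh; case: (eqVneq x u) => [->|xu].
    by move=> y hy; apply: fold_disc.
  case hd: (disc st x).
  + have [_ _ hh] := e1 x hd.
    have hx' : x \notin heap st by move: hnh; rewrite hh /= in_setD1 xu.
    move=> y /(I3 x hd hx') yd. by have [] := e1 y yd.
  + have [_ hh _] := e4 x hx (negbT hd). by rewrite hh in hnh.
- move=> v vs hv; case hd: (disc st v).
  + have [k1 k2 k3] := e1 v hd.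
    have [p1 [u0 [q1 q2 q3 q4 q5]]] := I4 v vs hd.
    rewrite k2; split => //; exists u0.
    have [m1 m2 m3] := e1 u0 q3.
    have u0u : u0 != u by apply: contraNneq q4 => ->.
    split => //; first by rewrite m3 /= in_setD1 (negbTE q4) andbF.
    by rewrite e2 /= /upd (negbTE u0u).
  + have [p1 p2 p3] := e4 v hv (negbT hd).
    split; first exact: leq_trans I5 p3.
    exists u; split => //.
    * by apply: contraNneq (negbT hd) => <-.
    * by have [] := e1 u ud.
    * by have [_ _ ->] := e1 u ud; rewrite /= setD11.
    * by rewrite e2 /= /upd eqxx.
- exact: leq_trans I5 e3.
Qed.

Lemma Inv_run st : dijkstra_run adj w s st -> Inv st.
Proof. elim=> [|st1 st2 _ IH hs]; [exact: Inv_init | exact: Inv_step IH hs]. Qed.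


Lemma pweight_rcons (wt : V -> V -> R) x p y :
  pweight wt x (rcons p y) = pweight wt x p + wt (last x p) y.
Proof. elim: p x => [|z p IH] x /=; first by rewrite !addr0 add0r. by rewrite IH addrA. Qed.

Lemma potential_linearization (d : V -> R) (L : seq V) :
  d s = 0 ->
  (forall v, v != s -> exists2 u, v \in adj u & d u < d v) ->
  perm_eq L (enum [pred x | x != s]) ->
  sorted (fun x y => d x < d y) L ->
  @linearization R V adj s L.
Proof.
move=> ds par pL sL; split => //.
pose w' := fun u v => if d u < d v then d v - d u else 1.
exists w'; split.
  by move=> u v _; rewrite /w'; case: ifP => h; [rewrite subr_gt0 | exact: ltr01].
exists d; split => //.
have lb : forall x p, d (last x p) - d x <= pweight w' x p.
  move=> x p; elim: p x => [|y p IH] x /=; first by rewrite subrr.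
  have := IH y; rewrite /w'; case: ifP => h; first by lra.
  by move/negbT: h; rewrite -leNgt; lra.
move=> v; split; last first.
  by move=> p _ <-; have := lb s p; rewrite ds subr0.
suff H : forall n v, (#|[pred x | (d x < d v)%R]| < n)%N ->
  exists p, path (grel adj) s p /\ last s p = v /\ pweight w' s p = d v.
  exact: H _ _ (ltnSn _).
clear v; elim=> [//|n IH] v hn.
case: (eqVneq v s) => [->|vs]; first by exists [::].
have [u uv duv] := par v vs.
have [|p [p1 [p2 p3]]] := IH u.
  rewrite ltnS in hn; apply: leq_trans hn; apply: proper_card; apply/properP; split.
    by apply/subsetP => x; rewrite !inE => h; apply: lt_trans h duv.
  by exists u; rewrite !inE ?ltxx.
exists (rcons p v); rewrite rcons_path last_rcons p1 p2 /= uv; split => //; split => //.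
by rewrite pweight_rcons p2 p3 /w' duv; lra.
Qed.

End Pf.

Theorem lemma7 (R : realFieldType) (V : finType) (adj : V -> seq V)
  (w : V -> V -> R) (s : V) :
  (forall u, uniq (adj u)) ->
  (forall u v, v \in adj u -> 0 < w u v) ->
  (forall v, connect (grel adj) s v) ->
  (forall u v d, is_sp_dist adj s w u d -> is_sp_dist adj s w v d -> u = v) ->
  forall fin : state R V, dijkstra_run adj w s fin -> heap fin = set0 ->
  forall r : V -> R,
    (forall x, x != s -> ((pusht fin x)%:R <= r x) && (r x <= (popt fin x)%:R)) ->
    {in [pred x | x != s] &, injective r} ->
  forall L : seq V, perm_eq L (enum [pred x | x != s]) ->
    sorted (fun x y => r x < r y) L ->
    @linearization R V adj s L.
Proof.
move=> _ _ conn _ fin run hfin r hr rinj L pL sL.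
have [I1 _ I3 I4 _] := Inv_run run.
have alld : forall v, isSome (dst fin v).
  move=> v; have /connectP [p pp ->] := conn v.
  elim: p (s) I1 pp => [//|y p IH] x hx /= /andP [xy pp].
  apply: IH pp; apply: I3 hx _ _ xy; by rewrite hfin inE.
pose d := fun v => if v == s then 0 else r v.
apply: (@potential_linearization R V adj s d).
- by rewrite /d eqxx.
- move=> v vs; have [p1 [u [q1 q2 q3 q4 q5]]] := I4 v vs (alld v).
  exists u => //; rewrite /d (negbTE vs).
  have /andP [hv1 _] := hr v vs.
  case: (eqVneq u s) => [_|us].
    apply: lt_le_trans hv1; by rewrite ltr0n.
  have /andP [_ hu2] := hr u us.
  rewrite lt_neqAle; apply/andP; split.
    by apply/eqP => /rinj; rewrite !inE => /(_ us vs) e; rewrite e eqxx in q2.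
  apply: le_trans hu2 (le_trans _ hv1); by rewrite ler_nat.
- exact: pL.
- have allL : all [pred x | x != s] L.
    by apply/allP => x; rewrite (perm_mem pL) mem_enum.
  rewrite (eq_in_sorted (e' := fun x y => r x < r y) _ allL) //.
  by move=> x y /= xs ys; rewrite /d (negbTE xs) (negbTE ys).
Qed.
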